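(* Let $f:\mathbb{E}\to\mathbb{R}\cup\{+\infty\}$ be a proper extended real function that is strongly pseudoconvex (in the Hadamard sense) at $\bar x\in\operatorname{dom} f$. Then $\bar x$ is an isolated local minimizer of second order of $f$ if and only if $0\in\partial^{(1)}_- f(\bar x)$.
   Context: $\mathbb{E}$ is a real finite-dimensional Euclidean space; $\operatorname{dom} f=\{x:f(x)<+\infty\}$. For $x\in\operatorname{dom} f$: $f^{(1)}_-(x;u)=\liminf_{t\downarrow 0,\,u'\to u} t^{-1}[f(x+tu')-f(x)]$ and $\partial^{(1)}_- f(x)=\{x^*\in L^1(\mathbb{E}) : x^*(u)\le f^{(1)}_-(x;u)\ \forall u\in\mathbb{E}\}$ ($L^1(\mathbb{E})$ = linear functionals). $f$ is strongly pseudoconvex at $\bar x\in\operatorname{dom} f$ iff for every $d\in\mathbb{E}$ with $\|d\|=1$ and $f^{(1)}_-(\bar x;d)=0$ there exist $\varepsilon>0$, $\delta>0$, $\alpha>0$ such that $f(\bar x+td')\ge f(\bar x)+\alpha t^2$ for all $t\in[0,\delta)$ and all $d'\in\mathbb{E}$ with $\|d'\|=1$, $\|d'-d\|<\varepsilon$. $\bar x$ is an isolated local minimizer of second order iff there exist a neighborhood $N$ of $\bar x$ and $C>0$ with $f(x)>f(\bar x)+C\|x-\bar x\|^2$ for all $x\in N\setminus\{\bar x\}$. *)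

(* Defs.v *)
From Stdlib Require Import Reals Lra Classical ClassicalEpsilon.
From Stdlib Require Fin.
Open Scope R_scope.

Definition vec (n : nat) := Fin.t n -> R.

Fixpoint fsum (n : nat) : (Fin.t n -> R) -> R :=
  match n with
  | O => fun _ => 0
  | S m => fun x => x Fin.F1 + fsum m (fun i => x (Fin.FS i))
  end.

Definition vadd {n} (x y : vec n) : vec n := fun i => x i + y i.
Definition vscale {n} (a : R) (x : vec n) : vec n := fun i => a * x i.
Definition vsub {n} (x y : vec n) : vec n := fun i => x i - y i.
Definition vzero {n} : vec n := fun _ => 0.
Definition vnorm {n} (x : vec n) : R := sqrt (fsum n (fun i => x i * x i)).

Inductive ERbar := Finite (r : R) | p_infty | m_infty.

Definition ERbar_le (x y : ERbar) : Prop :=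
  match x, y with
  | m_infty, _ => True
  | _, p_infty => True
  | Finite a, Finite b => a <= b
  | _, _ => False
  end.
Definition ERbar_lt (x y : ERbar) : Prop := ERbar_le x y /\ x <> y.

Definition is_glb (S : ERbar -> Prop) (l : ERbar) : Prop :=
  (forall y, S y -> ERbar_le l y) /\
  (forall m, (forall y, S y -> ERbar_le m y) -> ERbar_le m l).
Definition is_lub (S : ERbar -> Prop) (l : ERbar) : Prop :=
  (forall y, S y -> ERbar_le y l) /\
  (forall m, (forall y, S y -> ERbar_le y m) -> ERbar_le l m).

(** inf / sup in the complete lattice of extended reals (they always exist). *)
Definition ERbar_inf (S : ERbar -> Prop) : ERbar :=
  epsilon (inhabits p_infty) (is_glb S).
Definition ERbar_sup (S : ERbar -> Prop) : ERbar :=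
  epsilon (inhabits p_infty) (is_lub S).

Definition dom {n} (f : vec n -> ERbar) (x : vec n) : Prop :=
  exists r, f x = Finite r.
Definition proper {n} (f : vec n -> ERbar) : Prop :=
  (exists x, dom f x) /\ (forall x, f x <> m_infty).

Definition fval {n} (f : vec n -> ERbar) (x : vec n) : R :=
  match f x with Finite a => a | _ => 0 end.

Definition dquot {n} (f : vec n -> ERbar) (x : vec n) (t : R) (u' : vec n) : ERbar :=
  match f (vadd x (vscale t u')) with
  | Finite a => Finite ((a - fval f x) / t)
  | p_infty => p_infty
  | m_infty => m_infty
  end.

(** Lower Hadamard directional derivative
    f^(1)_-(x;u) = liminf_{t↓0, u'→u} t^{-1}[f(x+tu') - f(x)]
                 = sup_{eps>0} inf { quotient : 0<t<eps, ||u'-u||<eps }. *)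
Definition lower_dini {n} (f : vec n -> ERbar) (x u : vec n) : ERbar :=
  ERbar_sup (fun v => exists eps, 0 < eps /\
    v = ERbar_inf (fun w => exists t u', 0 < t < eps /\
           vnorm (vsub u' u) < eps /\ w = dquot f x t u')).

Definition is_linear_functional {n} (xs : vec n -> R) : Prop :=
  (forall u v, xs (vadd u v) = xs u + xs v) /\
  (forall a u, xs (vscale a u) = a * xs u).

Definition in_lower_subdiff {n} (f : vec n -> ERbar) (x : vec n) (xs : vec n -> R) : Prop :=
  is_linear_functional xs /\ forall u, ERbar_le (Finite (xs u)) (lower_dini f x u).

Definition strongly_pseudoconvex_at {n} (f : vec n -> ERbar) (xb : vec n) : Prop :=
  forall d : vec n, vnorm d = 1 -> lower_dini f xb d = Finite 0 ->
  exists eps delta alpha, 0 < eps /\ 0 < delta /\ 0 < alpha /\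
    forall t d', 0 <= t < delta -> vnorm d' = 1 -> vnorm (vsub d' d) < eps ->
      ERbar_le (Finite (fval f xb + alpha * t ^ 2)) (f (vadd xb (vscale t d'))).

Definition isolated_local_min_2 {n} (f : vec n -> ERbar) (xb : vec n) : Prop :=
  exists r C, 0 < r /\ 0 < C /\
    forall x, vnorm (vsub x xb) < r -> x <> xb ->
      ERbar_lt (Finite (fval f xb + C * (vnorm (vsub x xb)) ^ 2)) (f x).

(* Main.v *)
Require Import Defs.
From Stdlib Require Import Reals Lra Psatz Classical ClassicalEpsilon FunctionalExtensionality Rtopology.
Open Scope R_scope.

Definition vtl {n} (x : vec (S n)) : vec n := fun i => x (Fin.FS i).
Definition vcons {n} (a : R) (v : vec n) : vec (S n) :=
  fun i => Fin.caseS' i (fun _ => R) a v.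

Lemma fsum_ext n : forall g h : Fin.t n -> R, (forall i, g i = h i) -> fsum n g = fsum n h.
Proof. induction n; intros g h H; simpl; [reflexivity|]. rewrite H. f_equal. apply IHn. intro; apply H. Qed.

Lemma fsum_scale n : forall (c : R) g, fsum n (fun i => c * g i) = c * fsum n g.
Proof. induction n; intros c g; simpl; [ring|]. rewrite (IHn c (fun i => g (Fin.FS i))). ring. Qed.

Lemma fsum_sq_nonneg n : forall x : vec n, 0 <= fsum n (fun i => x i * x i).
Proof. induction n; intros x; simpl; [lra|]. specialize (IHn (fun i => x (Fin.FS i))). simpl in IHn. nra. Qed.

Lemma vnorm_nonneg n (x : vec n) : 0 <= vnorm x.
Proof. apply sqrt_pos. Qed.

Lemma vnorm_ext n (x y : vec n) : (forall i, x i = y i) -> vnorm x = vnorm y.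
Proof. intro H; unfold vnorm; f_equal; apply fsum_ext; intro i; rewrite H; ring. Qed.

Lemma vnorm_S n (x : vec (S n)) : vnorm x = sqrt (x Fin.F1 ^ 2 + vnorm (vtl x) ^ 2).
Proof. unfold vnorm at 1. cbn [fsum]. f_equal. unfold vnorm. rewrite pow2_sqrt.
  - unfold vtl. ring.
  - apply (fsum_sq_nonneg n (vtl x)). Qed.

Lemma vnorm_S_le n (x : vec (S n)) : vnorm x <= Rabs (x Fin.F1) + vnorm (vtl x).
Proof. rewrite vnorm_S. rewrite <- (sqrt_pow2 (Rabs (x Fin.F1) + vnorm (vtl x))).
  2:{ pose proof (Rabs_pos (x Fin.F1)); pose proof (vnorm_nonneg _ (vtl x)); lra. }
  apply sqrt_le_1_alt. pose proof (Rabs_pos (x Fin.F1)); pose proof (vnorm_nonneg _ (vtl x)).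
  rewrite <- (pow2_abs (x Fin.F1)). nra. Qed.

Lemma abs_le_sqrt y z : 0 <= z -> Rabs y <= sqrt (y^2 + z).
Proof. intro Hz. apply Rle_trans with (sqrt (y^2)).
  - rewrite <- pow2_abs, sqrt_pow2 by apply Rabs_pos. lra.
  - apply sqrt_le_1_alt. lra. Qed.

Lemma coord_le n : forall (x : vec n) i, Rabs (x i) <= vnorm x.
Proof. induction n; intros x i. - inversion i.
  - rewrite vnorm_S. pattern i; apply Fin.caseS'.
    + apply abs_le_sqrt. apply pow2_ge_0.
    + intro j. specialize (IHn (vtl x) j). unfold vtl in IHn at 1.
      eapply Rle_trans; [exact IHn|].
      rewrite Rplus_comm. eapply Rle_trans; [apply (Rle_abs (vnorm (vtl x)))|].
      apply abs_le_sqrt. apply pow2_ge_0.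
Qed.

Lemma vnorm_scale n (a : R) (x : vec n) : vnorm (vscale a x) = Rabs a * vnorm x.
Proof. unfold vnorm, vscale.
  rewrite (fsum_ext n _ (fun i => (a*a) * (x i * x i))) by (intro; ring).
  rewrite fsum_scale. rewrite sqrt_mult_alt by nra.
  f_equal. rewrite <- sqrt_Rsqr_abs. reflexivity. Qed.

Lemma mink2 a b p q : 0<=p -> 0<=q ->
  sqrt((a+b)^2+(p+q)^2) <= sqrt(a^2+p^2)+sqrt(b^2+q^2).
Proof. intros Hp Hq.
  pose proof (sqrt_pos (a^2+p^2)) as S1. pose proof (sqrt_pos (b^2+q^2)) as S2.
  pose proof (pow2_sqrt (a^2+p^2) ltac:(nra)) as E1.
  pose proof (pow2_sqrt (b^2+q^2) ltac:(nra)) as E2.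
  set (s1 := sqrt (a^2+p^2)) in *. set (s2 := sqrt (b^2+q^2)) in *.
  assert (s1*s2 >= a*b+p*q).
  { assert ((s1*s2)^2 >= (a*b+p*q)^2).
    { replace ((s1*s2)^2) with (s1^2*s2^2) by ring. rewrite E1, E2.
      assert (0 <= (a*q-b*p)^2) by apply pow2_ge_0. nra. }
    assert (0 <= s1*s2) by nra. nra. }
  rewrite <- (sqrt_pow2 (s1+s2)) by lra. apply sqrt_le_1_alt. nra. Qed.

Lemma vnorm_triangle n : forall x y : vec n, vnorm (vadd x y) <= vnorm x + vnorm y.
Proof. induction n; intros x y.
  - unfold vnorm; simpl. rewrite sqrt_0. lra.
  - rewrite !(vnorm_S _ (vadd x y)), (vnorm_S _ x), (vnorm_S _ y).
    change (vtl (vadd x y)) with (vadd (vtl x) (vtl y)).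
    pose proof (IHn (vtl x) (vtl y)). pose proof (vnorm_nonneg _ (vadd (vtl x) (vtl y))).
    pose proof (vnorm_nonneg _ (vtl x)). pose proof (vnorm_nonneg _ (vtl y)).
    eapply Rle_trans; [| apply mink2; assumption].
    apply sqrt_le_1_alt. change (vadd x y Fin.F1) with (x Fin.F1 + y Fin.F1). nra.
Qed.

Lemma ERle_trans x y z : ERbar_le x y -> ERbar_le y z -> ERbar_le x z.
Proof. destruct x, y, z; simpl; intros; try lra; tauto. Qed.

Lemma ERle_antisym x y : ERbar_le x y -> ERbar_le y x -> x = y.
Proof. destruct x, y; simpl; intros; try tauto. f_equal; lra. Qed.

Lemma ERle_pinf x : ERbar_le x p_infty.
Proof. destruct x; simpl; auto. Qed.

Lemma lub_ex (S : ERbar -> Prop) : exists l, Defs.is_lub S l.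
Proof.
  destruct (classic (S p_infty)) as [Hp|Hp].
  { exists p_infty; split; [intros; apply ERle_pinf|]. intros m Hm. apply Hm; auto. }
  destruct (classic (exists r, S (Finite r))) as [[r0 Hr0]|Hr].
  - destruct (classic (exists M, forall r, S (Finite r) -> r <= M)) as [[M HM]|HM].
    + destruct (completeness (fun r => S (Finite r))) as [L [HL1 HL2]].
      { exists M. intros r Hr; apply HM; auto. }
      { exists r0; auto. }
      exists (Finite L). split.
      * intros [y| |] Hy; simpl; auto. all: try (apply HL1; auto).
      * intros [m| |] Hm; simpl; auto.
        -- apply HL2. intros r Hr. exact (Hm _ Hr).
        -- exact (Hm _ Hr0).
    + exists p_infty. split; [intros; apply ERle_pinf|].
      intros [m| |] Hm; simpl; auto.
      * apply HM. exists m. intros r Hr. exact (Hm _ Hr).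
      * exact (Hm _ Hr0).
  - exists m_infty. split.
    + intros [y| |] Hy; simpl; auto. apply Hr; eauto.
    + intros; simpl; auto.
Qed.

Definition eneg (x : ERbar) : ERbar :=
  match x with Finite r => Finite (- r) | p_infty => m_infty | m_infty => p_infty end.

Lemma eneg_inv x : eneg (eneg x) = x.
Proof. destruct x; simpl; auto. f_equal; ring. Qed.

Lemma eneg_le x y : ERbar_le (eneg x) (eneg y) -> ERbar_le y x.
Proof. destruct x, y; simpl; auto; lra. Qed.

Lemma glb_ex (S : ERbar -> Prop) : exists l, Defs.is_glb S l.
Proof.
  destruct (lub_ex (fun y => S (eneg y))) as [L [H1 H2]].
  exists (eneg L). split.
  - intros y Hy. apply eneg_le. rewrite eneg_inv. apply H1. rewrite eneg_inv; auto.
  - intros m Hm. apply eneg_le. rewrite eneg_inv. apply H2.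
    intros y Hy. apply eneg_le. rewrite eneg_inv. apply Hm; auto.
Qed.

Lemma inf_spec S : Defs.is_glb S (ERbar_inf S).
Proof. unfold ERbar_inf. apply epsilon_spec. apply glb_ex. Qed.

Lemma sup_spec S : Defs.is_lub S (ERbar_sup S).
Proof. unfold ERbar_sup. apply epsilon_spec. apply lub_ex. Qed.

Lemma arch_inv e : 0 < e -> exists N : nat, / (INR N + 1) < e.
Proof. intro He. destruct (archimed_cor1 e He) as [N [H1 H2]]. exists N.
  eapply Rle_lt_trans; [|exact H1]. apply Rinv_le_contravar.
  apply lt_0_INR; auto. lra. Qed.

Lemma inv_S_pos k : 0 < / (INR k + 1).
Proof. apply Rinv_0_lt_compat. pose proof (pos_INR k); lra. Qed.

Lemma inv_S_le k N : (N <= k)%nat -> / (INR k + 1) <= / (INR N + 1).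
Proof. intro H. apply Rinv_le_contravar. pose proof (pos_INR N); lra.
  apply le_INR in H. lra. Qed.

Lemma inv_S_le1 k : / (INR k + 1) <= 1.
Proof. rewrite <- Rinv_1 at 2. apply Rinv_le_contravar. lra. pose proof (pos_INR k); lra. Qed.

Fixpoint mkphi (g : nat -> nat -> nat) (j : nat) : nat :=
  match j with O => g O O | S j' => g (S j') (S (mkphi g j')) end.

Lemma subseq1 (h : nat -> R) M : (forall k, Rabs (h k) <= M) ->
  exists l (phi : nat -> nat), (forall j, (j <= phi j)%nat) /\
    forall e, 0 < e -> exists J, forall j, (J <= j)%nat -> Rabs (h (phi j) - l) < e.
Proof.
  intro HM.
  destruct (Bolzano_Weierstrass h (fun c => -M <= c <= M) (compact_P3 (-M) M)) as [l Hl].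
  { intro k. specialize (HM k). pose proof (Rle_abs (h k)); pose proof (Rle_abs (- h k)); rewrite Rabs_Ropp in *; lra. }
  assert (G : forall j N, exists p, (N <= p)%nat /\ Rabs (h p - l) < / (INR j + 1)).
  { intros j N. destruct (Hl (fun y => Rabs (y - l) < / (INR j + 1)) N) as [p Hp].
    - exists (mkposreal _ (inv_S_pos j)). intros y Hy. exact Hy.
    - exists p; exact Hp. }
  set (g := fun j N => proj1_sig (constructive_indefinite_description _ (G j N))).
  assert (Hg : forall j N, (N <= g j N)%nat /\ Rabs (h (g j N) - l) < / (INR j + 1)).
  { intros j N. unfold g. destruct (constructive_indefinite_description _ (G j N)); simpl; auto. }
  exists l, (mkphi g). split.
  - induction j; simpl. lia. destruct (Hg (S j) (S (mkphi g j))). lia.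
  - assert (Hc : forall j, Rabs (h (mkphi g j) - l) < / (INR j + 1)).
    { destruct j; simpl; apply Hg. }
    intros e He. destruct (arch_inv e He) as [N HN]. exists N. intros j Hj.
    eapply Rlt_le_trans; [apply Hc|]. pose proof (inv_S_le j N Hj). lra.
Qed.

Lemma cluster n : forall (s : nat -> vec n) M, (forall k i, Rabs (s k i) <= M) ->
  exists y, forall eps, 0 < eps -> forall N, exists k, (N <= k)%nat /\ vnorm (vsub (s k) y) < eps.
Proof.
  induction n; intros s M HM.
  - exists vzero. intros eps He N. exists N. split; auto.
    unfold vnorm; simpl. rewrite sqrt_0; lra.
  - destruct (subseq1 (fun k => s k Fin.F1) M) as [l [phi [Hphi Hconv]]].
    { intro; apply HM. }
    destruct (IHn (fun j => vtl (s (phi j))) M) as [y' Hy'].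
    { intros; apply HM. }
    exists (vcons l y'). intros eps He N.
    destruct (Hconv (eps/2)) as [J HJ]; [lra|].
    destruct (Hy' (eps/2) ltac:(lra) (max N J)) as [j [Hj1 Hj2]].
    exists (phi j). split. { specialize (Hphi j). lia. }
    eapply Rle_lt_trans; [apply vnorm_S_le|].
    change (vtl (vsub (s (phi j)) (vcons l y'))) with (vsub (vtl (s (phi j))) y').
    change (vsub (s (phi j)) (vcons l y') Fin.F1) with (s (phi j) Fin.F1 - l).
    specialize (HJ j ltac:(lia)). simpl in HJ. lra.
Qed.

Lemma vnorm_opp n (x y : vec n) : vnorm (vsub x y) = vnorm (vsub y x).
Proof. unfold vnorm; f_equal; apply fsum_ext; intro; unfold vsub; ring. Qed.

Lemma vnorm_zero_eq n (x y : vec n) : vnorm (vsub x y) = 0 -> x = y.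
Proof. intro H. apply functional_extensionality. intro i.
  pose proof (coord_le n (vsub x y) i). rewrite H in H0. unfold vsub in H0.
  pose proof (Rabs_pos (x i - y i)). assert (Rabs (x i - y i) = 0) by lra.
  destruct (Req_dec (x i - y i) 0); [lra|]. pose proof (Rabs_no_R0 _ H3). lra. Qed.

Lemma notlt z y : ~ ERbar_lt (Finite z) y -> y <> m_infty -> exists a, y = Finite a /\ a <= z.
Proof. intros H1 H2. destruct y as [a| |].
  - exists a; split; auto. destruct (Rle_dec a z); auto. exfalso; apply H1. split; simpl. lra.
    intro E; injection E; lra.
  - exfalso; apply H1; split; simpl; auto. discriminate.
  - congruence. Qed.

Lemma ERle_fin0 v : (forall c, 0 < c -> ERbar_le v (Finite c)) -> ERbar_le v (Finite 0).
Proof. intro H. destruct v as [r| |]; simpl.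
  - destruct (Rle_dec r 0); auto. specialize (H (r/2) ltac:(lra)). simpl in H. lra.
  - apply (H 1); lra.
  - auto. Qed.

Lemma close_eq x y : (forall eps, 0 < eps -> Rabs (x - y) < eps) -> x = y.
Proof. intro H. destruct (Req_dec x y); auto. exfalso.
  assert (0 < Rabs (x - y)) by (apply Rabs_pos_lt; lra).
  specialize (H _ H1). lra. Qed.

Theorem theorem5 (n : nat) (f : vec n -> ERbar) (xb : vec n) :
  proper f -> dom f xb -> strongly_pseudoconvex_at f xb ->
  (isolated_local_min_2 f xb <-> in_lower_subdiff f xb (fun _ => 0)).
Proof.
  intros Hprop [b Hb] Hspc.
  assert (Hfv : fval f xb = b) by (unfold fval; rewrite Hb; auto).
  split.
  - intros [r [C [Hr [HC H]]]]. split. { split; intros; ring. }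
    intro u. change (ERbar_le (Finite 0) (lower_dini f xb u)).
    set (eps := Rmin 1 (r / (vnorm u + 1))).
    pose proof (vnorm_nonneg _ u) as Hu0.
    assert (Heps : 0 < eps). { unfold eps. apply Rmin_glb_lt. lra. apply Rdiv_lt_0_compat; lra. }
    assert (Heps1 : eps <= 1) by apply Rmin_l.
    assert (Heps2 : eps <= r / (vnorm u + 1)) by apply Rmin_r.
    assert (Hrr : r / (vnorm u + 1) * (vnorm u + 1) = r) by (field; lra).
    unfold lower_dini. eapply ERle_trans;
      [| apply (proj1 (sup_spec _)); exists eps; split; [exact Heps | reflexivity]].
    apply (proj2 (inf_spec _)). intros w [t [u' [Ht [Hu' ->]]]].
    assert (Hn1 : vnorm u' <= vnorm u + vnorm (vsub u' u)).
    { rewrite (vnorm_ext _ u' (vadd u (vsub u' u))) by (intro; unfold vadd, vsub; ring).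
      apply vnorm_triangle. }
    assert (Hnorm : vnorm (vsub (vadd xb (vscale t u')) xb) = t * vnorm u').
    { rewrite (vnorm_ext _ _ (vscale t u')) by (intro; unfold vadd, vsub, vscale; ring).
      rewrite vnorm_scale, Rabs_pos_eq; lra. }
    assert (Hlt : vnorm (vsub (vadd xb (vscale t u')) xb) < r).
    { rewrite Hnorm. pose proof (vnorm_nonneg _ u'). nra. }
    unfold dquot. destruct (classic (vadd xb (vscale t u') = xb)) as [E|E].
    + rewrite E, Hb, Hfv. simpl. replace (b - b) with 0 by ring. unfold Rdiv; rewrite Rmult_0_l; lra.
    + specialize (H _ Hlt E). destruct H as [Hle Hne].
      destruct (f (vadd xb (vscale t u'))) as [a| |]; simpl in *; auto.
      rewrite Hfv in Hle. unfold Rdiv. apply Rmult_le_pos.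
      * pose proof (pow2_ge_0 (vnorm (vsub (vadd xb (vscale t u')) xb))). nra.
      * left; apply Rinv_0_lt_compat; lra.
  - intros [_ Hsub]. apply NNPP; intro Hnot.
    assert (HH : forall k : nat, exists x, vnorm (vsub x xb) < / (INR k + 1) /\ x <> xb /\
      ~ ERbar_lt (Finite (fval f xb + / (INR k + 1) * vnorm (vsub x xb) ^ 2)) (f x)).
    { intro k. apply NNPP; intro Hn. apply Hnot. exists (/ (INR k + 1)), (/ (INR k + 1)).
      split; [apply inv_S_pos|]. split; [apply inv_S_pos|]. intros x H1 H2.
      apply NNPP; intro H3. apply Hn. exists x; auto. }
    set (xs := fun k => proj1_sig (constructive_indefinite_description _ (HH k))).
    assert (Hxs : forall k, vnorm (vsub (xs k) xb) < / (INR k + 1) /\ xs k <> xb /\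
      ~ ERbar_lt (Finite (fval f xb + / (INR k + 1) * vnorm (vsub (xs k) xb) ^ 2)) (f (xs k))).
    { intro k. unfold xs. destruct (constructive_indefinite_description _ (HH k)); simpl; auto. }
    set (t := fun k => vnorm (vsub (xs k) xb)).
    assert (Ht : forall k, 0 < t k /\ t k < / (INR k + 1)).
    { intro k. destruct (Hxs k) as [H1 [H2 _]]. split; auto.
      destruct (vnorm_nonneg _ (vsub (xs k) xb)); auto. exfalso. apply H2.
      apply vnorm_zero_eq; auto. }
    assert (Ha : forall k, exists a, f (xs k) = Finite a /\ a <= b + / (INR k + 1) * t k ^ 2).
    { intro k. destruct (Hxs k) as [_ [_ H3]]. rewrite Hfv in H3.
      apply notlt in H3; auto. apply Hprop. }
    set (av := fun k => proj1_sig (constructive_indefinite_description _ (Ha k))).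
    assert (Hav : forall k, f (xs k) = Finite (av k) /\ av k <= b + / (INR k + 1) * t k ^ 2).
    { intro k. unfold av. destruct (constructive_indefinite_description _ (Ha k)); simpl; auto. }
    set (ds := fun k => vscale (/ t k) (vsub (xs k) xb)).
    assert (Hds1 : forall k, vnorm (ds k) = 1).
    { intro k. unfold ds. rewrite vnorm_scale. destruct (Ht k).
      rewrite Rabs_pos_eq by (left; apply Rinv_0_lt_compat; lra). fold (t k). field; lra. }
    assert (Hds2 : forall k, vadd xb (vscale (t k) (ds k)) = xs k).
    { intro k. apply functional_extensionality; intro i. unfold ds, vadd, vscale, vsub.
      destruct (Ht k). field. lra. }
    assert (Hq : forall k, dquot f xb (t k) (ds k) = Finite ((av k - b) / t k)).
    { intro k. unfold dquot. rewrite Hds2, (proj1 (Hav k)), Hfv. reflexivity. }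
    assert (Hqb : forall k, (av k - b) / t k <= / (INR k + 1) * t k).
    { intro k. destruct (Ht k) as [Ht1 _]. destruct (Hav k) as [_ Ha2]. pose proof (pos_INR k).
      assert ((av k - b) / t k <= (/ (INR k + 1) * t k ^ 2) / t k).
      { unfold Rdiv. apply Rmult_le_compat_r; [left; apply Rinv_0_lt_compat; lra | lra]. }
      replace ((/ (INR k + 1) * t k ^ 2) / t k) with (/ (INR k + 1) * t k) in H0 by (field; lra).
      exact H0. }
    destruct (cluster n ds 1) as [d Hd].
    { intros k i. rewrite <- (Hds1 k). apply coord_le. }
    assert (Hd1 : vnorm d = 1).
    { apply close_eq. intros eps He. destruct (Hd eps He O) as [k [_ Hk]].
      assert (vnorm d <= vnorm (ds k) + vnorm (vsub (ds k) d)).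
      { rewrite (vnorm_ext _ d (vadd (ds k) (vsub d (ds k)))) by (intro; unfold vadd, vsub; ring).
        rewrite (vnorm_opp _ (ds k) d). apply vnorm_triangle. }
      assert (vnorm (ds k) <= vnorm d + vnorm (vsub (ds k) d)).
      { rewrite (vnorm_ext _ (ds k) (vadd d (vsub (ds k) d))) at 1 by (intro; unfold vadd, vsub; ring).
        apply vnorm_triangle. }
      rewrite Hds1 in *. apply Rabs_def1; lra. }
    assert (Hdini : lower_dini f xb d = Finite 0).
    { apply ERle_antisym; [| exact (Hsub d)].
      unfold lower_dini. apply (proj2 (sup_spec _)). intros v [eps [He ->]].
      apply ERle_fin0. intros c Hc.
      destruct (arch_inv (Rmin eps c)) as [N HN]. { apply Rmin_glb_lt; lra. }
      destruct (Hd eps He N) as [k [Hk1 Hk2]].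
      pose proof (Rmin_l eps c). pose proof (Rmin_r eps c).
      pose proof (inv_S_le k N Hk1). pose proof (inv_S_le1 k). pose proof (Ht k).
      pose proof (Hqb k). pose proof (inv_S_pos k).
      apply ERle_trans with (Finite ((av k - b) / t k)).
      + apply (proj1 (inf_spec _)). exists (t k), (ds k). split; [lra|]. split; [exact Hk2 | symmetry; apply Hq].
      + simpl. nra. }
    destruct (Hspc d Hd1 Hdini) as [eps [del [al [He [Hdel [Hal Hp]]]]]].
    destruct (arch_inv (Rmin del al)) as [N HN]. { apply Rmin_glb_lt; lra. }
    destruct (Hd eps He N) as [k [Hk1 Hk2]].
    pose proof (Rmin_l del al). pose proof (Rmin_r del al).
    pose proof (inv_S_le k N Hk1). pose proof (Ht k). pose proof (Hav k).
    specialize (Hp (t k) (ds k) ltac:(lra) (Hds1 k) Hk2).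
    rewrite Hds2, (proj1 (Hav k)), Hfv in Hp. simpl in Hp.
    assert (0 < t k ^ 2) by (apply pow_lt; lra). nra.
Qed.
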